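(* Let $v\geq 8$ be even. If a symmetric configuration $v_3$ has no blocking set, then its Levi graph is not Hamiltonian.
   Context: A symmetric configuration $v_3$ consists of a set of $v$ points and a collection of $v$ blocks, each block being a 3-element subset of the points, such that every point lies in exactly 3 blocks and any two distinct points lie in at most one common block. Its Levi graph is the bipartite graph whose vertices are the points and blocks, a point being adjacent to each block containing it. A blocking set is a subset $Q$ of the points such that every block contains at least one point of $Q$ and at least one point not in $Q$. *)

(* Defs.v *)
From mathcomp Require Import all_boot.
Set Implicit Arguments. Unset Strict Implicit. Unset Printing Implicit Defensive.

Definition sym_config_3 (T : finType) (blocks : {set {set T}}) : Prop :=
  [/\ #|blocks| = #|T|,
      (forall b, b \in blocks -> #|b| = 3),
      (forall x : T, #|[set b in blocks | x \in b]| = 3) &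
      (forall x y : T, x != y -> #|[set b in blocks | (x \in b) && (y \in b)]| <= 1)].

Definition blocking_set (T : finType) (blocks : {set {set T}}) (Q : {set T}) : Prop :=
  forall b, b \in blocks ->
    (exists2 x, x \in b & x \in Q) /\ (exists2 y, y \in b & y \notin Q).

(* Levi graph: vertices are points (inl) and blocks (inr), on the type
   T + {set T}; vertex set and adjacency. *)
Definition levi_vertices (T : finType) (blocks : {set {set T}}) : {set T + {set T}} :=
  [set u | match u with inl _ => true | inr b => b \in blocks end].

Definition levi_adj (T : finType) (blocks : {set {set T}}) : rel (T + {set T}) :=
  fun u w => match u, w with
  | inl x, inr b => (b \in blocks) && (x \in b)
  | inr b, inl x => (b \in blocks) && (x \in b)
  | _, _ => false
  end.

Definition hamiltonian (V : finType) (S : {set V}) (e : rel V) : Prop :=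
  exists s : seq V, [/\ uniq s, (forall u, (u \in s) = (u \in S)),
                        3 <= size s & cycle e s].

(* Main.v *)
Require Import Defs.
From mathcomp Require Import all_boot.
From mathcomp Require Import zify.

Lemma idx_next (V : eqType) (s : seq V) x : uniq s -> x \in s ->
  index (next s x) s = (index x s).+1 %% size s.
Proof.
case: s => // y p us xin; rewrite next_nth xin.
have hi := index_mem x (y :: p); rewrite xin in hi.
case: (ltnP (index x (y :: p)) (size p)) => hlt.
  have -> : nth y p (index x (y :: p)) = nth y (y :: p) (index x (y :: p)).+1 by [].
  rewrite index_uniq //.
  by rewrite modn_small.
have he : index x (y :: p) = size p by apply/eqP; rewrite eqn_leq hlt -ltnS -[(size p).+1]/(size (y :: p)) hi.
by rewrite nth_default ?he // /= eqxx modnn.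
Qed.

Lemma mod_succ i n : i < n -> i.+1 %% n = if i.+1 < n then i.+1 else 0.
Proof.
move=> h; case: ifP => h2; first by rewrite modn_small.
have -> : i.+1 = n by apply/eqP; rewrite eqn_leq h leqNgt h2.
by rewrite modnn.
Qed.

Lemma levi_card (T : finType) (blocks : {set {set T}}) :
  #|levi_vertices blocks| = #|T| + #|blocks|.
Proof.
have -> : levi_vertices blocks = inl @: [set: T] :|: inr @: blocks.
  apply/setP => -[x|b]; rewrite !inE /=.
    by rewrite imset_f ?inE.
  apply/esym; case hb: (b \in blocks).
    by rewrite (imset_f (fun b : {set T} => @inr T {set T} b)) ?orbT.
  apply/negP => /orP [/imsetP [y _] //| /imsetP [y hy] [] ?]; subst.
  by rewrite hy in hb.
rewrite cardsU.
have -> : inl @: [set: T] :&: inr @: blocks = set0.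
  apply/setP => u; rewrite !inE; apply/negP => /andP [/imsetP [? _ ->] /imsetP [? _]] //.
rewrite cards0 subn0 !card_imset ?cardsT //.
  by move=> ? ? [].
by move=> ? ? [].
Qed.

Theorem mainTheorem11 (T : finType) (blocks : {set {set T}}) :
  ~~ odd #|T| -> 8 <= #|T| ->
  sym_config_3 blocks ->
  ~ (exists Q : {set T}, blocking_set blocks Q) ->
  ~ hamiltonian (levi_vertices blocks) (levi_adj blocks).
Proof.
move=> hev h8 [hcard hb3 hdeg hinter] hnoQ [s [us hs hsz hcyc]].
have hn : size s = 2 * #|T|.
  rewrite -(card_uniqP us) (eq_card hs) levi_card hcard; lia.
apply: hnoQ; exists [set x | index (inl x) s %% 4 < 2] => b bin.
have hb : inr b \in s by rewrite hs inE.
have xin : prev s (inr b) \in s by rewrite mem_prev.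
have e1 := prev_cycle hcyc hb.
have e2 := next_cycle hcyc hb.
have nx : next s (prev s (inr b)) = inr b by rewrite (@next_prev _ _ us).
have i1 := @idx_next _ _ _ us xin.
have yin : next s (inr b) \in s by rewrite mem_next.
have i2 := @idx_next _ _ _ us hb.
move: e1 e2 nx i1 i2 xin yin.
case: (prev s (inr b)) => [x0|?] //; case: (next s (inr b)) => [y0|?] //=.
move=> /andP [_ hx] /andP [_ hy] -> i1 i2 xin yin.
rewrite i1 in i2.
have hi := index_mem (inl x0) s; rewrite xin in hi.
set i := index (inl x0) s in i1 i2 hi.
rewrite hn in i2 hi.
have hj : (i.+1 %% (2 * #|T|)) < 2 * #|T| by rewrite ltn_mod; lia.
rewrite (@mod_succ _ _ hj) (@mod_succ i) // in i2.
have hm : exists m, #|T| = 2 * m by exists (#|T| %/ 2); move: hev; rewrite -dvdn2; lia.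
case: hm => m hm; rewrite hm in i2 hi.
have hy4 : (index (inl y0) s %% 4 < 2) = ~~ (i %% 4 < 2).
  rewrite i2; case h1: (i.+1 < 2 * (2 * m)); case h2: (_ < 2 * (2 * m)); lia.
case h: (i %% 4 < 2).
  split; [exists x0 => //; by rewrite inE h | exists y0 => //; by rewrite inE hy4 h].
split; [exists y0 => //; by rewrite inE hy4 h | exists x0 => //; by rewrite inE h].
Qed.
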